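(* Let $X$ be a real vector space, $n\ge 2$, and let $(\cdot,\cdot\mid\cdot,\ldots,\cdot)$ be a weak $n$-inner product on $X$, with $\|x\mid x_n,\ldots,x_2\|:=\sqrt{(x,x\mid x_n,\ldots,x_2)}$. Fix $x_2,\ldots,x_n\in X$, let $Y=\mathrm{span}\{x_2,\ldots,x_n\}$ and let $X/Y=\{\hat x: x\in X\}$ with $\hat x=\{u\in X: u-x\in Y\}$. Then the function $\varphi:X/Y\to[0,\infty)$, $\varphi(\hat x):=\|x\mid x_n,\ldots,x_2\|$, is well defined and is a seminorm on $X/Y$. Moreover, if $x_2,\ldots,x_n$ are linearly independent, then $\varphi$ is a norm on $X/Y$.
   Context: A weak $n$-inner product ($n\ge2$) on a real vector space $X$ is a function $(\cdot,\cdot\mid\cdot,\ldots,\cdot):X^{n+1}\to\mathbb{R}$, written $(x,y\mid x_n,\ldots,x_2)$, such that for all $x,x',y,x_2,\ldots,x_n\in X$ and $\alpha\in\mathbb{R}$: (P1) $(x,x\mid x_n,\ldots,x_2)\ge 0$, with equality if and only if $x,x_2,\ldots,x_n$ are linearly dependent; (P2) $(x,x\mid x_n,\ldots,x_2)=(x_n,x_n\mid x,x_{n-1},\ldots,x_2)$; (P3) $(x,y\mid x_n,\ldots,x_2)=(y,x\mid x_n,\ldots,x_2)$; (P4) $(\alpha x,y\mid x_n,\ldots,x_2)=\alpha(x,y\mid x_n,\ldots,x_2)$; (P5) $(x+x',y\mid x_n,\ldots,x_2)=(x,y\mid x_n,\ldots,x_2)+(x',y\mid x_n,\ldots,x_2)$.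 *)

(* Defs.v *)
From HB Require Import structures.
From mathcomp Require Import all_boot all_order all_algebra.
From mathcomp Require Import reals.
Set Implicit Arguments. Unset Strict Implicit. Unset Printing Implicit Defensive.
Import Order.TTheory GRing.Theory Num.Theory.
Local Open Scope ring_scope.

Section WeakNIP.
Variables (R : realType) (X : lmodType R).

Definition lin_dep (s : seq X) : Prop :=
  exists c : 'I_(size s) -> R,
    (exists i, c i != 0) /\ \sum_(i < size s) c i *: s`_i = 0.

Definition in_span (s : seq X) (u : X) : Prop :=
  exists c : 'I_(size s) -> R, u = \sum_(i < size s) c i *: s`_i.

(* the coset  x^ = { u | u - x \in span s }, an element of X / span s *)
Definition coset (s : seq X) (x : X) : X -> Prop :=
  fun u => in_span s (u - x).

(* ip x y [:: x_n; x_(n-1); ...; x_2] stands for (x, y | x_n, ..., x_2).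
   Only lists of length n-1 are relevant. *)
Definition weak_n_inner_product (n : nat) (ip : X -> X -> seq X -> R) : Prop :=
  forall zs : seq X, size zs = n.-1 ->
  [/\ forall x, 0 <= ip x x zs /\ (ip x x zs = 0 <-> lin_dep (x :: zs)),
      forall x, ip x x zs = ip (head 0 zs) (head 0 zs) (x :: behead zs),
      forall x y, ip x y zs = ip y x zs,
      forall (a : R) x y, ip (a *: x) y zs = a * ip x y zs
    & forall x x' y, ip (x + x') y zs = ip x y zs + ip x' y zs].

Definition nip_norm (ip : X -> X -> seq X -> R) (x : X) (zs : seq X) : R :=
  Num.sqrt (ip x x zs).

End WeakNIP.

(* Main.v *)
Require Import Defs.
From HB Require Import structures.
From mathcomp Require Import all_boot all_order all_algebra.
From mathcomp Require Import reals.
From mathcomp Require Import ring lra.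
From Stdlib Require Import FunctionalExtensionality PropExtensionality.
Import Order.TTheory GRing.Theory Num.Theory.
Local Open Scope ring_scope.

Section Aux.
Variables (R : realType) (X : lmodType R).

Lemma cs_aux (a b c : R) : 0 <= a -> 0 <= c ->
  (forall s t : R, 0 <= s ^+ 2 * a + 2 * s * t * b + t ^+ 2 * c) ->
  b ^+ 2 <= a * c.
Proof.
move=> a0 c0 H.
have [cp|] := ltrP 0 c.
  have := H c (- b). move=> h.
  have : 0 <= c * (a * c - b ^+ 2) by nra.
  rewrite pmulr_rge0 // => h2; lra.
move=> cle; have c00 : c = 0 by lra.
subst c.
have [->|bn] := eqVneq b 0; first by rewrite expr0n /= mulr0.
have := H 1 (- (a + 1) / (2 * b)).
have -> : 1 ^+ 2 * a + 2 * 1 * (- (a + 1) / (2 * b)) * b + (- (a + 1) / (2 * b)) ^+ 2 * 0 = -1.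
  by field; rewrite ?mulf_neq0 ?pnatr_eq0 ?bn ?andbT //=.
lra.
Qed.

Lemma span_add (s : seq X) u v : in_span s u -> in_span s v -> in_span s (u + v).
Proof.
move=> [c ->] [d ->]; exists (fun i => c i + d i).
by rewrite -big_split /=; apply: eq_bigr => i _; rewrite scalerDl.
Qed.

Lemma span_scale (s : seq X) (a : R) u : in_span s u -> in_span s (a *: u).
Proof.
move=> [c ->]; exists (fun i => a * c i).
rewrite scaler_sumr; apply: eq_bigr => i _; by rewrite scalerA.
Qed.

Lemma span_0 (s : seq X) : in_span s 0.
Proof. exists (fun _ => 0); rewrite big1 // => i _; by rewrite scale0r. Qed.

Lemma span_dep (s : seq X) y : in_span s y -> lin_dep (y :: s).
Proof.
move=> [d yE].
pose f := fun i : 'I_(size s).+1 => match unlift ord0 i with None => -1 | Some j => d j end.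
have f0 : f ord0 = -1 by rewrite /f unlift_none.
have fl : forall i, f (lift ord0 i) = d i by move=> i; rewrite /f liftK.
exists f.
split.
  exists ord0; rewrite f0; apply/eqP => /eqP; rewrite oppr_eq0 oner_eq0 //.
rewrite (@big_ord_recl _ _ _ (size s)) f0.
under eq_bigr => i _ do rewrite fl.
rewrite scaleN1r addrC; apply/eqP; rewrite subr_eq0; apply/eqP.
by rewrite yE; apply: eq_bigr.
Qed.

End Aux.

(* zs = [:: x_n; ...; x_2], Y = span zs, phi (coset zs x) = nip_norm ip x zs. *)
Theorem theorem2p3 (R : realType) (X : lmodType R) (n : nat)
    (ip : X -> X -> seq X -> R) (zs : seq X) :
  (2 <= n)%N -> weak_n_inner_product n ip -> size zs = n.-1 ->
  [/\ (* phi is well defined on X/Y *)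
      forall x u : X, coset zs x = coset zs u -> nip_norm ip x zs = nip_norm ip u zs,
      (* values in [0, oo) *)
      forall x : X, 0 <= nip_norm ip x zs,
      (* absolute homogeneity: phi (a x^) = |a| phi (x^), with a x^ = (a x)^ *)
      forall (a : R) (x : X), nip_norm ip (a *: x) zs = `|a| * nip_norm ip x zs,
      (* triangle inequality: x^ + y^ = (x + y)^ *)
      forall x y : X, nip_norm ip (x + y) zs <= nip_norm ip x zs + nip_norm ip y zs
    & (* definiteness when x_2, ..., x_n are linearly independent *)
      ~ lin_dep zs -> forall x : X, nip_norm ip x zs = 0 -> coset zs x = coset zs 0].
Proof.
move=> _ Hw Hs; have [P1 _ P3 P4 P5] := Hw zs Hs.
have P4r : forall a x y, ip x (a *: y) zs = a * ip x y zs.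
  by move=> a x y; rewrite P3 P4 P3.
have P5r : forall x y y', ip x (y + y') zs = ip x y zs + ip x y' zs.
  by move=> x y y'; rewrite P3 P5 P3 [ip y' _ _]P3.
have expand : forall s t x y, ip (s *: x + t *: y) (s *: x + t *: y) zs =
   s ^+ 2 * ip x x zs + 2 * s * t * ip x y zs + t ^+ 2 * ip y y zs.
  move=> s t x y; rewrite !P5 !P5r !P4 !P4r [ip y x zs]P3; lra.
have CS : forall x y, ip x y zs ^+ 2 <= ip x x zs * ip y y zs.
  move=> x y; apply: cs_aux; [exact: (P1 x).1 | exact: (P1 y).1 |].
  move=> s t; rewrite -expand; exact: (P1 _).1.
have exp1 : forall x y, ip (x + y) (x + y) zs =
   ip x x zs + 2 * ip x y zs + ip y y zs.
  by move=> x y; have := expand 1 1 x y; rewrite !scale1r => ->; lra.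
split.
- move=> x u Hc.
  have : coset zs x u by rewrite Hc /coset subrr; exact: span_0.
  rewrite /coset => Hy; set y := u - x in Hy.
  have -> : u = x + y by rewrite /y addrC subrK.
  have y0 : ip y y zs = 0 by apply/(P1 y).2; exact: span_dep.
  have := CS x y; rewrite y0 mulr0 => h.
  have b0 : ip x y zs = 0.
    have : ip x y zs ^+ 2 = 0 by have := sqr_ge0 (ip x y zs); lra.
    by move/eqP; rewrite sqrf_eq0 => /eqP.
  by rewrite /nip_norm exp1 b0 y0; congr Num.sqrt; lra.
- by move=> x; exact: sqrtr_ge0.
- move=> a x; rewrite /nip_norm P4 P4r mulrA -expr2 sqrtrM ?sqr_ge0 //.
  by rewrite sqrtr_sqr.
- move=> x y; rewrite /nip_norm.
  set a := ip x x zs; set c := ip y y zs; set b := ip x y zs.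
  have a0 : 0 <= a by exact: (P1 x).1.
  have c0 : 0 <= c by exact: (P1 y).1.
  have sa := sqr_sqrtr a0; have sc := sqr_sqrtr c0.
  have sa0 := sqrtr_ge0 a; have sc0 := sqrtr_ge0 c.
  have hb : b <= Num.sqrt a * Num.sqrt c.
    have h := CS x y; rewrite -/a -/b -/c in h.
    have : b ^+ 2 <= (Num.sqrt a * Num.sqrt c) ^+ 2 by rewrite exprMn sa sc.
    have := mulr_ge0 sa0 sc0. nra.
  rewrite -[X in _ <= X]ger0_norm; last by lra.
  rewrite -sqrtr_sqr; apply: ler_wsqrtr.
  rewrite exp1 -/a -/b -/c sqrrD sa sc; lra.
- move=> Hind x Hx.
  have h0 : ip x x zs = 0.
    move: Hx; rewrite /nip_norm => /eqP; rewrite sqrtr_eq0 => h.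
    have := (P1 x).1; lra.
  have [c [[i ci] Hc]] := (P1 x).2.1 h0.
  have c0 : c ord0 != 0.
    apply/negP => /eqP c0; apply: Hind.
    exists (fun j => c (lift ord0 j)); split.
      case: (unliftP ord0 i) ci => [j -> | ->]; last by rewrite c0 eqxx.
      by move=> cj; exists j.
    by move: Hc; rewrite big_ord_recl c0 scale0r add0r.
  have xs : in_span zs x.
    move: Hc; rewrite big_ord_recl /= => Hc.
    have -> : x = (- (c ord0)^-1) *: \sum_(j < size zs) c (lift ord0 j) *: zs`_j.
      apply: (@scalerI _ _ (c ord0)) => //.
      rewrite scalerA mulrN mulfV // scaleN1r.
      by apply/eqP; rewrite -addr_eq0; apply/eqP.
    apply: span_scale; by exists (fun j => c (lift ord0 j)).
  apply: functional_extensionality => u; apply: propositional_extensionality.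
  rewrite /coset subr0; split => h.
    by have := @span_add _ _ zs _ _ h xs; rewrite subrK.
  by rewrite -scaleN1r addrC; apply: span_add; [apply: span_scale|].
Qed.
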